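(* Let $\delta>0$, let $T$ be a positive integer, and let $\Gamma$ be $\beta$-regular with constants $0<c_0<C_0$. Then $$\mathbb{E}_\Gamma\Bigl[\mathbf 1(\mu<1-3\delta)\min\Bigl(1+\frac{1}{1-2\delta-\mu},\,T(1-\mu)\Bigr)\Bigr]\le C_0\cdot\begin{cases}5+\log(1/\delta),&\beta=1,\\ C(\beta),&\beta>1,\\ C(\beta)\min(\sqrt T,1/\delta)^{1-\beta},&\beta<1,\end{cases}$$ where $C(\beta)$ is a constant depending only on $\beta$.
   Context: A distribution $\Gamma$ on $[0,1]$ is $\beta$-regular if there exist constants $0<c_0<C_0$ such that $c_0\epsilon^\beta\le\mathbb{P}_\Gamma(\mu>1-\epsilon)\le\mathbb{P}_\Gamma(\mu\ge1-\epsilon)\le C_0\epsilon^\beta$ for all $\epsilon\in(0,1]$. $\mathbb{E}_\Gamma$ denotes expectation over $\mu\sim\Gamma$. *)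

(* Defs.v *)
From HB Require Import structures.
From mathcomp Require Import all_boot all_order all_algebra.
From mathcomp Require Import all_classical all_reals all_analysis.
Set Implicit Arguments. Unset Strict Implicit. Unset Printing Implicit Defensive.
Import Order.TTheory GRing.Theory Num.Theory.
Local Open Scope classical_set_scope.
Local Open Scope ring_scope.

(* A distribution Gamma on [0,1] is modelled as a probability measure on the
   Borel sets of R giving mass 1 to [0,1]. *)
Definition on_unit_interval (R : realType) (G : probability R R) : Prop :=
  G `[0, 1]%classic = 1%E.

Definition beta_regular (R : realType) (G : probability R R)
    (beta c0 C0 : R) : Prop :=
  on_unit_interval G /\ 0 < c0 /\ c0 < C0 /\
  forall eps : R, 0 < eps -> eps <= 1 ->
    (((c0 * eps `^ beta)%R)%:E <= G `](1 - eps)%R, +oo[%classic)%E /\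
    (G `](1 - eps)%R, +oo[%classic <= G `[(1 - eps)%R, +oo[%classic)%E /\
    (G `[(1 - eps)%R, +oo[%classic <= ((C0 * eps `^ beta)%R)%:E)%E.

Definition lemma9_integrand (R : realType) (delta : R) (T : nat) (mu : R) : R :=
  if mu < 1 - 3 * delta then
    Order.min (1 + 1 / (1 - 2 * delta - mu)) (T%:R * (1 - mu))
  else 0.

Definition lemma9_lhs (R : realType) (G : probability R R) (delta : R) (T : nat)
  : \bar R :=
  (\int[G]_mu (lemma9_integrand delta T mu)%:E)%E.

(* Main.v *)
Require Import Defs.
From HB Require Import structures.
From mathcomp Require Import all_boot all_order all_algebra.
From mathcomp Require Import all_classical all_reals all_analysis.
From mathcomp Require Import measurable_realfun ring lra.
Import Order.TTheory GRing.Theory Num.Theory.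
Local Open Scope ring_scope.

Section Aux.
Context {R : realType}.

Lemma min_layer (v : R) (t : nat -> R) (N : nat) :
  (forall j, t j <= t j.+1) ->
  Order.min v (t N) <= t 0%N + \sum_(j < N) (t j.+1 - t j) * (if t j < v then 1 else 0).
Proof.
move=> tnd; elim: N => [|N IH].
  by rewrite big_ord0 addr0 ge_min lexx orbT.
rewrite big_ord_recr /=.
have := tnd N; case: (ltP (t N) v) => hv tN.
- have e : Order.min v (t N) = t N by apply/min_idPr; apply: ltW.
  rewrite e in IH; rewrite mulr1.
  have : Order.min v (t N.+1) <= t N.+1 by rewrite ge_min lexx orbT.
  lra.
- have e : Order.min v (t N) = v by apply/min_idPl.
  have e2 : Order.min v (t N.+1) = v by apply/min_idPl; apply: (le_trans hv).
  rewrite e in IH; rewrite e2 mulr0 addr0; exact: IH.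
Qed.

Lemma integrand_ge0 (delta : R) (T : nat) mu : 0 < delta ->
  0 <= lemma9_integrand delta T mu.
Proof.
move=> d0; rewrite /lemma9_integrand; case: ifP => // h.
have y0 : 0 < 1 - 2 * delta - mu by lra.
rewrite le_min; apply/andP; split.
  by rewrite addr_ge0 // divr_ge0 // ltW.
by rewrite mulr_ge0 // ; lra.
Qed.

Lemma integrand_le1 (delta : R) (T : nat) mu : 0 < delta -> mu < 1 - 3 * delta ->
  lemma9_integrand delta T mu <= 1 + 1 / (1 - 2 * delta - mu).
Proof. by move=> d0 h; rewrite /lemma9_integrand h ge_min lexx. Qed.

Lemma integrand_le2 (delta : R) (T : nat) mu : 0 < delta -> mu < 1 - 3 * delta ->
  lemma9_integrand delta T mu <= T%:R * (1 - mu).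
Proof. by move=> d0 h; rewrite /lemma9_integrand h ge_min lexx orbT. Qed.

Lemma integrand_0 (delta : R) (T : nat) mu : 1 - 3 * delta <= mu ->
  lemma9_integrand delta T mu = 0.
Proof. by move=> h; rewrite /lemma9_integrand ltNge h. Qed.

End Aux.
Section Meas.
Context {R : realType}.

Lemma integrand_meas (delta : R) (T : nat) : 0 < delta ->
  measurable_fun setT (lemma9_integrand delta T).
Proof.
move=> d0.
pose f1 := fun mu : R => 1 + 1 / Num.max (1 - 2 * delta - mu) delta.
pose f2 := fun mu : R => T%:R * (1 - mu).
have -> : lemma9_integrand delta T =
   (fun mu => if mu < 1 - 3 * delta then (f1 \min f2) mu else 0).
  apply: funext => mu; rewrite /lemma9_integrand; case: ifP => // h.
  rewrite /f1 /f2 /=; congr (Order.min (1 + 1 / _) _).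
  apply/esym/max_idPl; lra.
apply: measurable_fun_ifT.
- apply: measurable_realfun.measurable_fun_ltr; [exact: measurable_id | exact: measurable_cst].
- apply: measurable_realfun.measurable_minr.
  + apply: measurable_realfun.nondecreasing_measurable => // x y xy; rewrite /f1 lerD2l.
    have h1 : 0 < Num.max (1 - 2 * delta - y) delta by rewrite lt_max d0 orbT.
    have h2 : Num.max (1 - 2 * delta - y) delta <= Num.max (1 - 2 * delta - x) delta.
      rewrite ge_max !le_max lexx orbT andbT; apply/orP; left; lra.
    rewrite !div1r lef_pV2 //; rewrite posrE //.
    exact: lt_le_trans h2.
  + apply: measurable_realfun.nonincreasing_measurable => // x y xy; rewrite /f2.
    apply: ler_wpM2l => //; lra.
- exact: measurable_cst.
Qed.

End Meas.
Section Layer.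
Context {R : realType}.


Lemma probT d (T : measurableType d) (P : probability T R) (c : \bar R) :
  (c * P setT)%E = c.
Proof. by rewrite probability_setT mule1. Qed.

Lemma int_indicT d (T : measurableType d) (P : probability T R) (A : set T) :
  measurable A -> (\int[P]_x (\1_A x)%:E)%E = P A.
Proof. by move=> mA; rewrite integral_indic // setIT. Qed.

Lemma layer_bound (G : probability R R) (g : R -> R) (t e : nat -> R) (N : nat) :
  on_unit_interval G -> measurable_fun setT g -> (forall mu, 0 <= g mu) ->
  0 <= t 0%N -> (forall j, t j <= t j.+1) ->
  (forall mu, 0 <= mu <= 1 -> g mu <= t N) ->
  (forall j mu, (j < N)%N -> 0 <= mu <= 1 -> t j < g mu -> 1 - e j <= mu) ->
  (\int[G]_mu (g mu)%:E <=
     (t 0%N)%:E + \sum_(j < N) ((t j.+1 - t j)%:E * G `[(1 - e j)%R, +oo[%classic))%E.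
Proof.
move=> G01 mg g0 t00 tnd gN ge.
have tdif j : 0 <= t j.+1 - t j by rewrite subr_ge0.
pose f2 := fun mu : R => ((t 0%N) + \sum_(j < N) (t j.+1 - t j) * \1_(`[1 - e j, +oo[%classic) mu)%:E.
have f20 (mu : R) : (0 <= f2 mu)%E.
  rewrite lee_fin addr_ge0 // sumr_ge0 // => j _.
  by rewrite mulr_ge0 // indicE.
have mf2 : measurable_fun [set: R] (f2 : R -> \bar R).
  apply/measurable_EFinP; apply: measurable_funD; first exact: measurable_cst.
  apply: measurable_sum => j.
  apply: measurable_funM; first exact: measurable_cst.
  exact: measurable_realfun.measurable_indic.
apply: (@le_trans _ _ (\int[G]_mu f2 mu)%E).
  apply: ae_ge0_le_integral => //.
  - by move=> x _; rewrite lee_fin.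
  - exact/measurable_EFinP.
  - exists (~` `[0, 1])%classic; split.
    + by apply: measurableC.
    + have := @probability_setC _ _ _ G `[0, 1]%classic (measurable_itv _).
      rewrite G01 subee; exact.
    + move=> mu /= H m01; move: m01; rewrite /= in_itv /= => m01.
      apply: H => _; rewrite /f2 lee_fin.
      have e1 : Order.min (g mu) (t N) = g mu by apply/min_idPl; apply: gN.
      rewrite -e1; apply: (le_trans (min_layer (g mu) t N tnd)).
      rewrite lerD2l; apply: ler_sum => j _; apply: ler_wpM2l => //.
      case: ifP => // h; rewrite indicE.
      suff -> : mu \in `[1 - e j, +oo[%classic by [].
      by rewrite inE /= in_itv /= andbT; apply: (ge (nat_of_ord j)) => //.
rewrite /f2.
under eq_integral do rewrite EFinD -sumEFin.
rewrite ge0_integralD //; last 2 first.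
- by move=> x _; rewrite sume_ge0 // => j _; rewrite lee_fin mulr_ge0 // indicE.
- by apply: emeasurable_sum => j; apply/measurable_EFinP; apply: measurable_funM;
    [exact: measurable_cst | exact: measurable_indic].
rewrite integral_cst //.
rewrite probT leeD2l // ge0_integral_sum //; last 2 first.
- by move=> j; apply/measurable_EFinP; apply: measurable_funM;
    [exact: measurable_cst | exact: measurable_indic].
- by move=> j x _; rewrite lee_fin mulr_ge0 // indicE.
apply: lee_sum => j _.
under eq_integral do rewrite EFinM.
rewrite ge0_integralZl_EFin //; last first.
  by apply/measurable_EFinP; exact: measurable_indic.
by rewrite int_indicT.
Qed.

End Layer.
Section Pt.
Context {R : realType}.
Implicit Types (delta mu k : R).


Lemma g_lt (delta : R) T mu : 0 < delta -> lemma9_integrand delta T mu < 1 + 1 / delta.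
Proof.
move=> d0; rewrite /lemma9_integrand; case: ifP => h; last first.
  have : 0 < 1 / delta by rewrite divr_gt0.
  lra.
have y0 : delta < 1 - 2 * delta - mu by lra.
have : Order.min (1 + 1 / (1 - 2 * delta - mu)) (T%:R * (1 - mu)) <=
   1 + 1 / (1 - 2 * delta - mu) by rewrite ge_min lexx.
move=> /le_lt_trans; apply; rewrite ltrD2l !div1r ltf_pV2 // posrE //; lra.
Qed.

Lemma g_pos_lt (delta : R) T mu : 0 < delta -> 0 < lemma9_integrand delta T mu ->
  mu < 1 - 3 * delta.
Proof.
by move=> d0; rewrite /lemma9_integrand; case: ifP => //; rewrite ltxx.
Qed.

Lemma g_thr (delta : R) T mu k : 0 < delta -> 0 < k ->
  k < lemma9_integrand delta T mu - 1 ->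
  (1 - mu < 1 / k + 2 * delta) /\ (1 - mu < 3 / k).
Proof.
move=> d0 k0 hk.
have gp : 0 < lemma9_integrand delta T mu by lra.
have hm := g_pos_lt _ _ _ d0 gp.
have y0 : delta < 1 - 2 * delta - mu by lra.
have h1 := integrand_le1 _ T _ d0 hm.
have : k < 1 / (1 - 2 * delta - mu) by lra.
rewrite ltr_pdivlMr; last lra.
move=> hk2.
have hy : 1 - 2 * delta - mu < 1 / k by rewrite ltr_pdivlMr // mulrC.
split; first lra.
have h3 : 3 * (1 - 2 * delta - mu) < 3 * (1 / k) by rewrite ltr_pM2l.
rewrite div1r in h3; lra.
Qed.

Lemma g_sqrt (delta : R) T mu : 0 < delta ->
  lemma9_integrand delta T mu <= 1 + 3 * Num.sqrt T%:R.
Proof.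
move=> d0; rewrite /lemma9_integrand; case: ifP => h; last first.
  by rewrite addr_ge0 // mulr_ge0.
set s := Num.sqrt T%:R.
have s0 : 0 <= s by apply: sqrtr_ge0.
have sT : s * s = T%:R by rewrite -expr2 sqr_sqrtr.
set x := 1 - mu.
have x0 : 3 * delta < x by rewrite /x; lra.
have y0 : delta < 1 - 2 * delta - mu by lra.
case: (leP (s * x) 1) => sx.
- rewrite ge_min; apply/orP; right.
  have : T%:R * x = s * (s * x) by rewrite mulrA sT.
  move=> ->; have : s * (s * x) <= s by rewrite -[leRHS]mulr1 ler_wpM2l.
  lra.
- rewrite ge_min; apply/orP; left.
  rewrite lerD2l.
  have yp : 0 < 1 - 2 * delta - mu by lra.
  rewrite ler_pdivrMr //.
  have : x <= 3 * (1 - 2 * delta - mu) by rewrite /x; lra.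
  move=> hx.
  have : 1 < s * x by [].
  move=> h2.
  have : s * x <= s * (3 * (1 - 2 * delta - mu)) by rewrite ler_wpM2l.
  lra.
Qed.

End Pt.
Section Num.
Context {R : realType}.

Lemma reg_tail (G : probability R R) (beta c0 C0 e : R) :
  beta_regular G beta c0 C0 -> 0 < e -> e <= 1 ->
  (G `[(1 - e)%R, +oo[%classic <= (C0 * e `^ beta)%:E)%E.
Proof. by move=> [_ [_ [_ H]]] e0 e1; case: (H e e0 e1) => _ []. Qed.

Lemma reg_le1 (G : probability R R) (a : R) : (G `[a, +oo[%classic <= 1)%E.
Proof. exact: probability_le1. Qed.

Lemma reg_C0 (G : probability R R) (beta c0 C0 : R) :
  beta_regular G beta c0 C0 -> 1 <= C0.
Proof.
move=> [G01 [c00 [c0C0 H]]].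
have [_ [_ h]] := H 1 ltr01 (lexx _).
rewrite powR1 mulr1 subrr in h.
have h2 : (G `[0%R, 1%R]%classic <= G `[0%R, +oo[%classic)%E.
  apply: le_measure; rewrite ?inE; try exact: measurable_itv.
  by move=> x /=; rewrite !in_itv /= => /andP[-> _].
have := le_trans h2 h; rewrite G01 lee_fin; exact.
Qed.

Lemma harm (K : nat) : (0 < K)%N ->
  \sum_(i < K) 1 / (i.+1)%:R <= 1 + ln (K%:R : R).
Proof.
elim: K => // K IH _.
case: K IH => [|K] IH.
  by rewrite big_ord_recr big_ord0 /= add0r ln1 addr0 divr1.
rewrite big_ord_recr /=.
have := IH isT.
have hl : 1 / (K.+2)%:R <= ln ((K.+2)%:R : R) - ln (K.+1)%:R.
  have k2 : 0 < (K.+2)%:R :> R by rewrite ltr0n.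
  have k1 : 0 < (K.+1)%:R :> R by rewrite ltr0n.
  have hx : -1 < - (1 / (K.+2)%:R) :> R.
    by rewrite ltrN2 ltr_pdivrMr // mul1r ltr1n.
  have := le_ln1Dx hx.
  have -> : 1 + - (1 / (K.+2)%:R) = (K.+1)%:R / (K.+2)%:R :> R.
    have e2 : (K.+2)%:R = (K.+1)%:R + 1 :> R by rewrite -addn1 natrD.
    rewrite e2; field; apply: lt0r_neq0; have h0 : 0 <= K%:R :> R by []. lra.
  by rewrite ln_div ?posrE // lerNr opprB.
move=> h; apply: le_trans (lerD h hl) _; lra.
Qed.


Lemma geom_id (u : nat -> R) q : (forall j, u j.+1 = q * u j) ->
  forall n, (q - 1) * \sum_(j < n) u j = u n - u 0%N.
Proof.
move=> hu; elim=> [|n IH]; first by rewrite big_ord0 mulr0 subrr.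
by rewrite big_ord_recr /= mulrDr IH hu; ring.
Qed.

Lemma two_pow n : (n%:R : R) < 2 ^+ n.
Proof. by rewrite -natrX ltr_nat ltn_expl. Qed.

Definition vv (beta : R) (j : nat) : R := 2 ^+ j * (3 / 2 ^+ j.+1) `^ beta.

Lemma vv_ge0 beta j : 0 <= vv beta j.
Proof. by rewrite /vv mulr_ge0 ?powR_ge0 // exprn_ge0. Qed.

Lemma vv_step beta j : vv beta j.+1 = (2 * (1/2) `^ beta) * vv beta j.
Proof.
rewrite /vv.
have -> : 3 / 2 ^+ j.+2 = (3 / 2 ^+ j.+1) * (1 / 2) :> R.
  by rewrite [2 ^+ j.+2]exprS; field; rewrite expf_neq0.
have h1 : 0 <= 3 / 2 ^+ j.+1 :> R by rewrite divr_ge0 // exprn_ge0.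
have h2 : 0 <= 1 / 2 :> R by rewrite divr_ge0.
rewrite powRM // exprS; ring.
Qed.

Lemma vv0 beta : vv beta 0 = (3 / 2) `^ beta.
Proof. by rewrite /vv expr0 mul1r expr1. Qed.

Lemma powR_inv (x r : R) : 0 < x -> (x^-1) `^ r = (x `^ r)^-1.
Proof.
move=> x0.
have xi : 0 <= x^-1 by rewrite invr_ge0 ltW.
have h : (x * x^-1) `^ r = x `^ r * (x^-1) `^ r by rewrite powRM // ltW.
rewrite mulfV ?lt0r_neq0 // powR1 /= in h.
have xr : 0 < x `^ r by apply: powR_gt0.
by apply: (mulfI (lt0r_neq0 xr)); rewrite -h mulfV ?lt0r_neq0.
Qed.

Lemma vvN beta N : vv beta N = (3 / 2) `^ beta * (2 ^+ N) `^ (1 - beta).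
Proof.
rewrite /vv.
have x0 : 0 < 2 ^+ N :> R by apply: exprn_gt0.
have -> : 3 / 2 ^+ N.+1 = (3 / 2) * (2 ^+ N)^-1 :> R.
  by rewrite exprS invfM; ring.
have xi : 0 <= (2 ^+ N)^-1 :> R by rewrite invr_ge0 ltW.
rewrite powRM //.
rewrite powR_inv // powRB ?lt0r_neq0 ?implybT //.
have e : (2 ^+ N) `^ 1 = 2 ^+ N :> R by rewrite powRr1 // ltW.
rewrite e; ring.
Qed.

Lemma q_eq beta : 2 * (1/2) `^ beta = (1/2) `^ (beta - 1) :> R.
Proof.
have h2 : 0 <= 1/2 :> R by rewrite divr_ge0.
rewrite powRB; last by apply/implyP => _; apply: lt0r_neq0; lra.
transitivity ((1/2) `^ beta / (1/2) : R); last first.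
  by congr (_ / _); apply: esym; exact: (powRr1 h2).
by rewrite div1r invrK mulrC.
Qed.

Lemma half_pow_lt1 r : 0 < r -> (1/2) `^ r < 1 :> R.
Proof.
move=> r0.
have n1 : (1/2 : R) \in Num.nneg by rewrite nnegrE divr_ge0.
have n2 : (1 : R) \in Num.nneg by rewrite nnegrE.
have H := @gt0_ltr_powR R r r0 (1/2) 1 n1 n2.
rewrite powR1 /= in H; rewrite H; lra.
Qed.

Lemma q_lt1 beta : 1 < beta -> (1/2) `^ (beta - 1) < 1 :> R.
Proof. by move=> b1; apply: half_pow_lt1; lra. Qed.

Lemma q_gt1 beta : beta < 1 -> 1 < (1/2) `^ (beta - 1) :> R.
Proof.
move=> b1; rewrite -opprB powRN invf_gt1; last exact: powR_gt0.
by apply: half_pow_lt1; lra.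
Qed.

End Num.

Section C1.
Context {R : realType}.

Lemma case1 (delta : R) (T : nat) (G : probability R R) (c0 C0 : R) :
  0 < delta -> delta < 1 -> (0 < T)%N -> beta_regular G 1 c0 C0 ->
  (lemma9_lhs G delta T <= (C0 * (5 + ln (1 / delta)))%:E)%E.
Proof.
move=> d0 d1 T0 hreg.
have C01 := reg_C0 _ _ _ _ hreg.
have G01 : on_unit_interval G by case: hreg.
have id0 : 0 < 1 / delta by rewrite divr_gt0.
set K := Num.truncn (1 / delta).
have hK1 : 1 / delta < K.+1%:R by rewrite -truncn_le_nat.
have hK2 : K%:R <= 1 / delta by rewrite truncn_le ltW.
pose t := fun j : nat => j%:R : R.
pose e := fun j : nat => if (j < 2)%N then 2 else 1 / (j.-1)%:R + 2 * delta.
have L := layer_bound G (lemma9_integrand delta T) t e K.+2 G01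
  (integrand_meas delta T d0) (fun mu => integrand_ge0 delta T mu d0).
have tnd : forall j, t j <= t j.+1 by move=> j; rewrite /t ler_nat.
have gN : forall mu : R, 0 <= mu <= 1 -> lemma9_integrand delta T mu <= t K.+2.
  move=> mu _; apply/ltW; apply: (lt_le_trans (g_lt delta T mu d0)).
  rewrite /t -(addn1 K.+1) natrD addrC; apply: lerD => //; exact: ltW.
have ge : forall (j : nat) (mu : R), (j < K.+2)%N -> 0 <= mu <= 1 ->
    t j < lemma9_integrand delta T mu -> 1 - e j <= mu.
  move=> j mu _ /andP[m0 _] hj; rewrite /e.
  case: ltnP => j2; first lra.
  have k0 : 0 < (j.-1)%:R :> R by rewrite ltr0n; case: j j2 hj => [|[|j]].
  have hk : (j.-1)%:R < lemma9_integrand delta T mu - 1.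
    move: hj; rewrite /t.
    case: j j2 {k0} => [|j] //= _.
    by rewrite -addn1 natrD; lra.
  have [h1 _] := g_thr delta T mu _ d0 k0 hk.
  lra.
have L2 := L (lexx _) tnd gN ge.
rewrite /lemma9_lhs; apply: (le_trans L2).
pose b := fun j : nat => if (j < 2)%N then 1 else C0 * (1 / (j.-1)%:R + 2 * delta).
have t0 : t 0%N = 0 by rewrite /t.
rewrite t0 add0e.
have hb : forall j : 'I_K.+2,
    ((t j.+1 - t j)%:E * G `[(1 - e j)%R, +oo[%classic <= (b j)%:E)%E.
  move=> j; rewrite /t -addn1 natrD addrAC subrr add0r mul1e /b /e.
  case: ltnP => j2; first exact: reg_le1.
  have ej0 : 0 < 1 / (j.-1)%:R + 2 * delta :> R.
    have : 0 <= 1 / (j.-1)%:R :> R by rewrite divr_ge0.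
    lra.
  case: (leP (1 / (j.-1)%:R + 2 * delta) 1) => ej1.
    apply: (le_trans (reg_tail _ _ _ _ _ hreg ej0 ej1)).
    by rewrite powRr1 // ltW.
  apply: (le_trans (reg_le1 _ _)); rewrite lee_fin.
  have : 1 * 1 <= C0 * (1 / (j.-1)%:R + 2 * delta) by apply: ler_pM => //; lra.
  by rewrite mulr1.
apply: le_trans; first by apply: lee_sum => j _; exact: hb j.
rewrite sumEFin lee_fin.
rewrite 2!big_ord_recl /=.
have e2 : forall i : 'I_K, b (bump 0 (bump 0 i)) = C0 * (1 / (i.+1)%:R + 2 * delta).
  by move=> i; rewrite /b /bump /= add1n.
rewrite (eq_bigr _ (fun i _ => e2 i)) -mulr_sumr big_split /= sumr_const card_ord.
have hb0 : b 0%N = 1 by [].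
have hb1 : b (bump 0 0) = 1 by [].
rewrite hb0 hb1.
have hs' : forall K', K'%:R <= 1 / delta -> \sum_(i < K') 1 / (i.+1)%:R <= 1 + ln (1 / delta) :> R.
  case => [|K'] hK2'.
    rewrite big_ord0; have : 0 <= ln (1 / delta) by apply: ln_ge0; rewrite ler_pdivlMr // mul1r ltW.
    lra.
  apply: (le_trans (harm K'.+1 isT)); rewrite lerD2l ler_ln ?posrE //.
have hs := hs' K hK2.
have hc : (2 * delta) *+ K <= 2 :> R.
  rewrite -mulr_natr.
  have h := ler_wpM2l (ltW d0) hK2.
  have e3 : delta * (1 / delta) = 1 by rewrite div1r mulfV // lt0r_neq0.
  rewrite e3 in h; lra.
have hc2 : C0 * (\sum_(i < K) 1 / (i.+1)%:R + 2 * delta *+ K) <= C0 * (3 + ln (1 / delta)).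
  apply: ler_wpM2l; first lra.
  lra.
lra.
Qed.
End C1.

Section C2.
Context {R : realType}.

Lemma geo_layer (delta beta c0 C0 : R) (T : nat) (G : probability R R) (N : nat) :
  0 < delta -> beta_regular G beta c0 C0 ->
  (forall mu : R, 0 <= mu <= 1 -> lemma9_integrand delta T mu <= 3 * 2 ^+ N.+1) ->
  (lemma9_lhs G delta T <= (6 + 3 * C0 * \sum_(i < N) vv beta i.+1)%:E)%E.
Proof.
move=> d0 hreg gN.
have C01 := reg_C0 _ _ _ _ hreg.
have G01 : on_unit_interval G by case: hreg.
pose t := fun j : nat => 3 * 2 ^+ j : R.
pose e := fun j : nat => if j == 0%N then 2 else 3 / 2 ^+ j.+1 : R.
have tnd : forall j, t j <= t j.+1.
  move=> j; rewrite /t exprS ler_wpM2l // ler_peMl // ?exprn_ge0 //; lra.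
have ge : forall (j : nat) (mu : R), (j < N.+1)%N -> 0 <= mu <= 1 ->
    t j < lemma9_integrand delta T mu -> 1 - e j <= mu.
  move=> j mu _ /andP[m0 _] hj; rewrite /e.
  case: eqP => [_|/eqP j0]; first lra.
  have p1 : 1 <= 2 ^+ j :> R by rewrite exprn_ege1 //; lra.
  have k0 : 0 < 2 ^+ j.+1 :> R by apply: exprn_gt0.
  have hk : 2 ^+ j.+1 < lemma9_integrand delta T mu - 1.
    move: hj; rewrite /t exprS; lra.
  have [_ h2] := g_thr delta T mu _ d0 k0 hk.
  lra.
have t00 : 0 <= t 0%N by rewrite /t expr0 mulr1.
have L := layer_bound G (lemma9_integrand delta T) t e N.+1 G01
  (integrand_meas delta T d0) (fun mu => integrand_ge0 delta T mu d0) t00 tnd gN ge.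
rewrite /lemma9_lhs; apply: (le_trans L).
rewrite big_ord_recl /=.
have h0 : ((t 1%N - t 0%N)%:E * G `[(1 - e 0%N)%R, +oo[%classic <= 3%:E)%E.
  have -> : t 1%N - t 0%N = 3 by rewrite /t expr1 expr0; lra.
  have := reg_le1 G (1 - e 0%N).
  move=> h; apply: le_trans (lee_wpmul2l _ h) _; first by rewrite lee_fin.
  by rewrite mule1.
have hi : forall i : 'I_N, ((t i.+2 - t i.+1)%:E * G `[(1 - e i.+1)%R, +oo[%classic
    <= (3 * C0 * vv beta i.+1)%:E)%E.
  move=> i.
  have -> : t i.+2 - t i.+1 = 3 * 2 ^+ i.+1 by rewrite /t [2 ^+ i.+2]exprS; ring.
  have -> : e i.+1 = 3 / 2 ^+ i.+2 by [].
  have p4 : 4 <= 2 ^+ i.+2 :> R.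
    by rewrite -natrX ler_nat !expnS mulnA leq_pmulr // expn_gt0.
  have ep : 0 < 3 / 2 ^+ i.+2 :> R by rewrite divr_gt0 // exprn_gt0.
  have e1 : 3 / 2 ^+ i.+2 <= 1 :> R.
    by rewrite ler_pdivrMr ?exprn_gt0 // mul1r; lra.
  have h := reg_tail _ _ _ _ _ hreg ep e1.
  apply: le_trans (lee_wpmul2l _ h) _; first by rewrite lee_fin mulr_ge0 // exprn_ge0.
  rewrite -EFinM lee_fin /vv le_eqVlt; apply/orP; left; apply/eqP; ring.
under eq_bigr => i _ do rewrite /bump /= add1n.
apply: le_trans.
  apply: leeD; first exact: lexx.
  apply: leeD; first exact: h0.
  by apply: lee_sum => i _; exact: hi i.
rewrite sumEFin -!EFinD lee_fin /t expr0 mulr1 -mulr_sumr.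
lra.
Qed.

Lemma sum_vv_lt (beta : R) (n : nat) : 1 < beta ->
  \sum_(i < n) vv beta i.+1 <= (3/2) `^ beta / (1 - (1/2) `^ (beta - 1)).
Proof.
move=> b1; set q := (1/2) `^ (beta - 1).
have q1 : q < 1 by apply: q_lt1.
have hu : forall j, vv beta j.+1 = q * vv beta j by move=> j; rewrite vv_step q_eq.
have hid := geom_id _ _ hu n.+1.
rewrite big_ord_recl /= in hid.
have e1 : \sum_(i < n) vv beta (bump 0 i) = \sum_(i < n) vv beta i.+1.
  by apply: eq_bigr => i _; rewrite /bump /= add1n.
rewrite e1 vv0 in hid.
have v0 := vv_ge0 beta 0.
have vn := vv_ge0 beta n.+1.
rewrite vv0 in v0.
rewrite ler_pdivlMr; last lra.
set S := \sum_(i < n) vv beta i.+1 in hid *.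
have S0 : 0 <= S by apply: sumr_ge0 => i _; apply: vv_ge0.
set A := (3 / 2) `^ beta in hid v0 *.
have hA : (1 - q) * S = q * A - vv beta n.+1.
  have : (q - 1) * (A + S) = - ((1 - q) * (A + S)) by ring.
  move=> h; rewrite h in hid.
  have h2 : (1 - q) * (A + S) = A - vv beta n.+1 by lra.
  have h3 : (1 - q) * (A + S) = (1 - q) * A + (1 - q) * S by ring.
  lra.
have qA : q * A <= A by rewrite -[leRHS]mul1r ler_wpM2r // ltW.
rewrite mulrC; lra.
Qed.

Lemma sum_vv_gt (beta : R) (n : nat) : beta < 1 ->
  \sum_(i < n) vv beta i.+1 <= vv beta n.+1 / ((1/2) `^ (beta - 1) - 1).
Proof.
move=> b1; set q := (1/2) `^ (beta - 1).
have q1 : 1 < q by apply: q_gt1.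
have hu : forall j, vv beta j.+1 = q * vv beta j by move=> j; rewrite vv_step q_eq.
have hid := geom_id _ _ hu n.+1.
rewrite big_ord_recl /= in hid.
have e1 : \sum_(i < n) vv beta (bump 0 i) = \sum_(i < n) vv beta i.+1.
  by apply: eq_bigr => i _; rewrite /bump /= add1n.
rewrite e1 in hid.
have v0 := vv_ge0 beta 0.
rewrite ler_pdivlMr; last lra.
set S := \sum_(i < n) vv beta i.+1 in hid *.
set A := vv beta 0 in hid v0 *.
have h3 : (q - 1) * (A + S) = (q - 1) * A + (q - 1) * S by ring.
have qA : 0 <= q * A by rewrite mulr_ge0 // ltW // (lt_trans ltr01).
rewrite mulrC; lra.
Qed.

Lemma case2 (beta : R) : 1 < beta ->
  exists Cb : R,
  forall (delta : R) (T : nat) (G : probability R R) (c0 C0 : R),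
    0 < delta -> (0 < T)%N -> beta_regular G beta c0 C0 ->
    (lemma9_lhs G delta T <= (C0 * Cb)%:E)%E.
Proof.
move=> b1.
set B := (3/2) `^ beta / (1 - (1/2) `^ (beta - 1)).
exists (6 + 3 * B) => delta T G c0 C0 d0 T0 hreg.
have C01 := reg_C0 _ _ _ _ hreg.
have id0 : 0 < 1 / delta by rewrite divr_gt0.
set K := Num.truncn (1 / delta).
have hK1 : 1 / delta < K.+1%:R by rewrite -truncn_le_nat.
have gN : forall mu : R, 0 <= mu <= 1 -> lemma9_integrand delta T mu <= 3 * 2 ^+ K.+1.
  move=> mu _; apply/ltW; apply: (lt_le_trans (g_lt delta T mu d0)).
  have := two_pow (R:=R) K.+1.
  have : 1 <= 2 ^+ K.+1 :> R by rewrite exprn_ege1 //; lra.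
  move=> h1 h2; lra.
apply: (le_trans (geo_layer _ _ _ _ T _ _ d0 hreg gN)).
rewrite lee_fin.
have hs := sum_vv_lt _ K b1.
have hB : 0 <= B.
  rewrite /B divr_ge0 ?powR_ge0 //.
  have := q_lt1 _ b1; lra.
have : 3 * C0 * \sum_(i < K) vv beta i.+1 <= 3 * C0 * B.
  by rewrite ler_wpM2l // mulr_ge0 //; lra.
move=> h.
have : 6 <= 6 * C0 by lra.
move=> h6.
have -> : C0 * (6 + 3 * B) = 6 * C0 + 3 * C0 * B by ring.
lra.
Qed.

Lemma zero_case (delta : R) (T : nat) (G : probability R R) :
  0 < delta -> 1 <= 3 * delta -> on_unit_interval G ->
  (lemma9_lhs G delta T <= 0)%E.
Proof.
move=> d0 d3 G01.
have L := layer_bound G (lemma9_integrand delta T) (fun _ => 0) (fun _ => 0) 0 G01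
  (integrand_meas delta T d0) (fun mu => integrand_ge0 delta T mu d0) (lexx _)
  (fun _ => lexx _).
rewrite /lemma9_lhs; apply: le_trans (L _ _) _.
- move=> mu /andP[m0 _]; rewrite integrand_0 //; lra.
- by move=> j mu.
- by rewrite big_ord0 adde0.
Qed.

Lemma case3 (beta : R) : beta < 1 ->
  exists Cb : R,
  forall (delta : R) (T : nat) (G : probability R R) (c0 C0 : R),
    0 < delta -> (0 < T)%N -> beta_regular G beta c0 C0 ->
    (lemma9_lhs G delta T <=
       ((C0 * (Cb * (Order.min (Num.sqrt T%:R) (1 / delta)) `^ (1 - beta)))%R)%:E)%E.
Proof.
move=> b1.
set q := (1/2) `^ (beta - 1).
have q1 : 1 < q by apply: q_gt1.
set B := (3/2) `^ beta * 4 `^ (1 - beta) / (q - 1).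
have hB : 0 <= B by rewrite /B divr_ge0 ?mulr_ge0 ?powR_ge0 //; lra.
exists (6 + 3 * B) => delta T G c0 C0 d0 T0 hreg.
have C01 := reg_C0 _ _ _ _ hreg.
have G01 : on_unit_interval G by case: hreg.
set M := Order.min (Num.sqrt T%:R) (1 / delta).
have M0 : 0 <= M.
  rewrite /M le_min sqrtr_ge0 /= divr_ge0 //; exact: ltW.
have RHS0 : 0 <= C0 * ((6 + 3 * B) * M `^ (1 - beta)).
  by rewrite !mulr_ge0 ?powR_ge0 //; lra.
case: (leP 1 (3 * delta)) => d3.
  by apply: (le_trans (zero_case _ T _ d0 d3 G01)); rewrite lee_fin.
have M1 : 1 <= M.
  rewrite /M le_min; apply/andP; split.
    by rewrite -[X in X <= _]sqrtr1 ler_sqrt // ler1n.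
  rewrite ler_pdivlMr // mul1r; lra.
have Mb : 1 <= M `^ (1 - beta).
  have := @ge0_ler_powR R (1 - beta) _ 1 M.
  rewrite powR1 /=; apply; rewrite ?nnegrE //; lra.
have exN : exists n, M + 1 <= 2 ^+ n.
  exists (Num.truncn (M + 1)).+1.
  apply/ltW; apply: (lt_trans _ (two_pow _)).
  by rewrite -truncn_le_nat.
have [n0 Pn0 minn0] := find_ex_minn exN.
case: n0 Pn0 minn0 => [|N] Pn0 minn0.
  by rewrite expr0 in Pn0; exfalso; lra.
have hN : 2 ^+ N < M + 1.
  rewrite ltNge; apply/negP => h.
  by have := minn0 N h; rewrite ltnn.
have gN : forall mu : R, 0 <= mu <= 1 -> lemma9_integrand delta T mu <= 3 * 2 ^+ N.+1.
  move=> mu _.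
  have h1 := g_lt delta T mu d0.
  have h2 := g_sqrt delta T mu d0.
  have : lemma9_integrand delta T mu <= 1 + 3 * M.
    case: (leP (Num.sqrt T%:R) (1 / delta)) => hm.
      have -> : M = Num.sqrt T%:R by apply/min_idPl.
      lra.
    have -> : M = 1 / delta by apply/min_idPr; apply: ltW.
    have : 0 < 1 / delta by rewrite divr_gt0.
    lra.
  lra.
apply: (le_trans (geo_layer _ _ _ _ T _ _ d0 hreg gN)).
rewrite lee_fin.
have hs := sum_vv_gt _ N b1.
rewrite vvN -/q in hs.
have hp : (2 ^+ N.+1) `^ (1 - beta) <= (4 * M) `^ (1 - beta).
  apply: ge0_ler_powR; rewrite ?nnegrE ?exprn_ge0 //; try lra.
  rewrite exprS; lra.
rewrite powRM // in hp.
have hs2 : \sum_(i < N) vv beta i.+1 <= B * M `^ (1 - beta).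
  apply: (le_trans hs).
  have qi : 0 <= (q - 1)^-1 by rewrite invr_ge0; lra.
  have a0 : 0 <= (3/2) `^ beta :> R by apply: powR_ge0.
  have h1 : (3/2) `^ beta * (2 ^+ N.+1) `^ (1 - beta) / (q - 1) <=
            (3/2) `^ beta * (4 `^ (1 - beta) * M `^ (1 - beta)) / (q - 1).
    by rewrite ler_wpM2r // ler_wpM2l.
  apply: (le_trans h1); rewrite /B le_eqVlt; apply/orP; left; apply/eqP; ring.
have hfin : 6 + 3 * C0 * \sum_(i < N) vv beta i.+1 <= 6 * C0 * M `^ (1 - beta) + 3 * C0 * (B * M `^ (1 - beta)).
  have h6 : 6 <= 6 * C0 * M `^ (1 - beta).
    have : 1 <= C0 * M `^ (1 - beta) by rewrite -[leLHS]mulr1 ler_pM.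
    lra.
  have : 3 * C0 * \sum_(i < N) vv beta i.+1 <= 3 * C0 * (B * M `^ (1 - beta)).
    by rewrite ler_wpM2l // mulr_ge0 //; lra.
  lra.
apply: (le_trans hfin); rewrite le_eqVlt; apply/orP; left; apply/eqP; ring.
Qed.

End C2.

Theorem lemma9 (R : realType) :
  (* beta = 1 *)
  (forall (delta : R) (T : nat) (G : probability R R) (c0 C0 : R),
     0 < delta -> delta < 1 -> (0 < T)%N -> beta_regular G 1 c0 C0 ->
     (lemma9_lhs G delta T <= (C0 * (5 + ln (1 / delta)))%:E)%E) /\
  (* beta > 1 *)
  (forall beta : R, 1 < beta ->
     exists Cb : R,
     forall (delta : R) (T : nat) (G : probability R R) (c0 C0 : R),
       0 < delta -> (0 < T)%N -> beta_regular G beta c0 C0 ->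
       (lemma9_lhs G delta T <= (C0 * Cb)%:E)%E) /\
  (* beta < 1 *)
  (forall beta : R, beta < 1 ->
     exists Cb : R,
     forall (delta : R) (T : nat) (G : probability R R) (c0 C0 : R),
       0 < delta -> (0 < T)%N -> beta_regular G beta c0 C0 ->
       (lemma9_lhs G delta T <=
          ((C0 * (Cb * (Order.min (Num.sqrt T%:R) (1 / delta)) `^ (1 - beta)))%R)%:E)%E).
Proof.
split; first exact: case1.
split; [exact: case2 | exact: case3].
Qed.
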